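(* Let $N\ge2$ and for $u=(u_1,\dots,u_N)$, $v=(v_1,\dots,v_N)$ define the $N\times N$ matrices (indices mod $N$) $U(u,\lambda)=\lambda\sum_{k=1}^N E_{k+1,k}+\sum_{k=1}^N u_kE_{kk}$, $V(v,\lambda)=I+\lambda^{-1}\sum_{k=1}^N v_kE_{k,k+1}$. Then the set of pairs $(U(u,\lambda),V(v,\lambda))$ is a Poisson submanifold of $\mathbf{g}=g\oplus g$ equipped with PB$(\mathbf{A},\mathbf{B},\mathbf{C},\mathbf{D})$, where the operators have components $\mathbf{A}=\begin{pmatrix}A&-B\\ C&A\end{pmatrix}$, $\mathbf{B}=\begin{pmatrix}B&B\\ B&-C\end{pmatrix}$, $\mathbf{C}=\begin{pmatrix}C&C\\ C&-B\end{pmatrix}$, $\mathbf{D}=\begin{pmatrix}D&-C\\ B&D\end{pmatrix}$.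
   Context: $E_{ij}$ are matrix units. $g$ is the twisted loop algebra of formal Laurent series $u(\lambda)=\sum_{p\le p_0}\sum_{i-j\equiv p\ (\mathrm{mod}\ N)}\lambda^pu^{(p)}_{ij}E_{ij}$ with form $\langle u,v\rangle=\mathrm{tr}(u(\lambda)v(\lambda))_0$ (coefficient of $\lambda^0$). $g_k$: elements containing only $\lambda^k$; $g_\pm=\bigoplus_{\pm k>0}g_k$; $P_+,P_-,P_0$ projections onto $g_+,g_-,g_0$; $R_0=P_+-P_-$; $\Pi(E_{jj})=\sum_k\pi_{jk}E_{kk}$ with $\pi_{jk}=1$ ($j>k$), $-1$ ($j<k$), $0$ ($j=k$), extended as $\Pi\circ P_0$; $A=\frac12(R_0+\Pi)$, $D=\frac12(R_0-\Pi)$, $B=\frac12(P_0-\Pi)$, $C=\frac12(P_0+\Pi)$. $\mathbf{g}=g\oplus g$ with componentwise multiplication and form $\langle\langle\mathbf{u},\mathbf{v}\rangle\rangle=\sum_k\langle u_k,v_k\rangle$; a matrix of operators $(X_{ij})$ acts by $(\mathbf{X}(\mathbf{u}))_i=\sum_jX_{ij}(u_j)$. For smooth $\Phi$ on $\mathbf{g}$, $\nabla_j\Phi$ is the $j$-th gradient component, $d_j\Phi=u_j\nabla_j\Phi$, $d'_j\Phi=\nabla_j\Phi\,u_j$, and PB$(\mathbf{A},\mathbf{B},\mathbf{C},\mathbf{D})$ is $\{\Phi,\Psi\}=\sum_{i,j}\big(\langle A_{ij}(d'_j\Phi),d'_i\Psi\rangle-\langle D_{ij}(d_j\Phi),d_i\Psi\rangle+\langle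 B_{ij}(d_j\Phi),d'_i\Psi\rangle-\langle C_{ij}(d'_j\Phi),d_i\Psi\rangle\big)$. A Poisson submanifold is one to which all Hamiltonian vector fields of the bracket are tangent. *)

(* Defs.v *)
From HB Require Import structures.
From mathcomp Require Import all_boot all_order all_algebra.
From mathcomp Require Import zify.
From mathcomp Require Export reals.
Set Implicit Arguments. Unset Strict Implicit. Unset Printing Implicit Defensive.
Import Order.TTheory GRing.Theory Num.Theory.
Local Open Scope ring_scope.

(* The loop algebra g: formal Laurent series u(lambda) = sum_{p <= p0}      *)
(* lambda^p u^(p), u^(p) in 'M[R]_N.  An element is stored as its           *)
(* coefficient function together with an upper bound p0 on the degrees.    *)
(* The twisting condition (u^(p)_{ij} = 0 unless i - j = p mod N) is the    *)
(* separate predicate [twisted]; g = {u : loop | twisted u}.               *)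

Section Loop.
Variables (R : fieldType) (N : nat).

Record loop := Loop {
  coef : int -> 'M[R]_N;
  top : int;
  topP : forall p : int, top < p -> coef p = 0 }.

Definition twisted (u : loop) : Prop :=
  forall (p : int) (i j : 'I_N),
    ~ (N%:Z %| (i%:Z - j%:Z - p))%Z -> coef u p i j = 0.

Definition tnat (z : int) : nat := if z is Posz n then n else 0%N.

(* Cauchy product: (uv)^(p) = sum_{p - top v <= q <= top u} u^(q) v^(p-q) *)
Definition mul_coef (u v : loop) (p : int) : 'M[R]_N :=
  \sum_(k < tnat (top u + top v - p + 1))
     coef u (top u - k%:Z) *m coef v (p - top u + k%:Z).

Lemma mul_topP (u v : loop) (p : int) :
  top u + top v < p -> mul_coef u v p = 0.
Proof.
move=> H; rewrite /mul_coef.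
have -> : tnat (top u + top v - p + 1) = 0%N.
  rewrite /tnat; case E: (top u + top v - p + 1) => [n|n] //.
  have : (Posz n <= 0)%R by rewrite -E; lia.
  by rewrite lez_nat leqn0 => /eqP.
by rewrite big_ord0.
Qed.

Definition lmul (u v : loop) : loop := Loop (@mul_topP u v).

Lemma add_topP (u v : loop) (p : int) :
  Num.max (top u) (top v) < p -> coef u p + coef v p = 0.
Proof.
rewrite gt_max => /andP[Hu Hv]; by rewrite (topP Hu) (topP Hv) addr0.
Qed.
Definition ladd (u v : loop) : loop := Loop (@add_topP u v).

Lemma opp_topP (u : loop) (p : int) : top u < p -> - coef u p = 0.
Proof. by move=> H; rewrite (topP H) oppr0. Qed.
Definition lopp (u : loop) : loop := Loop (@opp_topP u).

Lemma scale_topP (c : R) (u : loop) (p : int) : top u < p -> c *: coef u p = 0.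
Proof. by move=> H; rewrite (topP H) scaler0. Qed.
Definition lscale (c : R) (u : loop) : loop := Loop (@scale_topP c u).

Definition form (u v : loop) : R := \tr (coef (lmul u v) 0).

Lemma Pplus_topP (u : loop) (p : int) :
  top u < p -> (if 0 < p then coef u p else 0) = 0.
Proof. by move=> H; rewrite (topP H); case: ifP. Qed.
Definition Pplus (u : loop) : loop := Loop (@Pplus_topP u).

Lemma Pminus_topP (u : loop) (p : int) :
  0 < p -> (if p < 0 then coef u p else 0) = 0.
Proof. by move=> H; case: ifP => // H'; lia. Qed.
Definition Pminus (u : loop) : loop := Loop (@Pminus_topP u).

Lemma P0_topP (u : loop) (p : int) :
  0 < p -> (if p == 0 then coef u p else 0) = 0.
Proof. by move=> H; case: ifP => // /eqP E; lia. Qed.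
Definition P0 (u : loop) : loop := Loop (@P0_topP u).

Definition pi_coef (j k : 'I_N) : R :=
  if (k < j)%N then 1 else if (j < k)%N then -1 else 0.

Definition Pimx (M : 'M[R]_N) : 'M[R]_N :=
  \matrix_(k, l) (if k == l then \sum_j pi_coef j k * M j j else 0).

Lemma Pi_topP (u : loop) (p : int) :
  0 < p -> (if p == 0 then Pimx (coef u 0) else 0) = 0.
Proof. by move=> H; case: ifP => // /eqP E; lia. Qed.
Definition Pi (u : loop) : loop := Loop (@Pi_topP u).

Definition op := loop -> loop.

Definition R0 : op := fun u => ladd (Pplus u) (lopp (Pminus u)).
Definition opA : op := fun u => lscale (2%:R^-1) (ladd (R0 u) (Pi u)).
Definition opD : op := fun u => lscale (2%:R^-1) (ladd (R0 u) (lopp (Pi u))).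
Definition opB : op := fun u => lscale (2%:R^-1) (ladd (P0 u) (lopp (Pi u))).
Definition opC : op := fun u => lscale (2%:R^-1) (ladd (P0 u) (Pi u)).
Definition opN (X : op) : op := fun u => lopp (X u).

Definition loop2 := 'I_2 -> loop.
Definition in_g2 (x : loop2) : Prop := forall k, twisted (x k).
Definition form2 (x y : loop2) : R := \sum_(k < 2) form (x k) (y k).

Definition mx2 (X00 X01 X10 X11 : op) : 'I_2 -> 'I_2 -> op :=
  fun i j => if i == ord0 then (if j == ord0 then X00 else X01)
             else (if j == ord0 then X10 else X11).

(* PB(A,B,C,D) evaluated at the point L on functions Phi, Psi whose         *)
(* gradients at L are X = grad Phi(L), Y = grad Psi(L):                     *)
(*   d_j Phi = L_j X_j ,  d'_j Phi = X_j L_j.                               *)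
Definition PB (A B C D : 'I_2 -> 'I_2 -> op) (L X Y : loop2) : R :=
  \sum_(i < 2) \sum_(j < 2)
    ( form (A i j (lmul (X j) (L j))) (lmul (Y i) (L i))
    - form (D i j (lmul (L j) (X j))) (lmul (L i) (Y i))
    + form (B i j (lmul (L j) (X j))) (lmul (Y i) (L i))
    - form (C i j (lmul (X j) (L j))) (lmul (L i) (Y i))).

Definition bA := mx2 opA (opN opB) opC opA.
Definition bB := mx2 opB opB opB (opN opC).
Definition bC := mx2 opC opC opC (opN opB).
Definition bD := mx2 opD (opN opC) opB opD.

(* T is (the value at L of) the Hamiltonian vector field of a function whose *)
(* gradient at L is X:  d Psi (T) = << grad Psi, T >> = {Phi, Psi}(L).        *)
Definition ham_vf (br : loop2 -> loop2 -> loop2 -> R) (L X T : loop2) : Prop :=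
  forall Y, in_g2 Y -> br L X Y = form2 Y T.

Definition poisson_submanifold (br : loop2 -> loop2 -> loop2 -> R)
    (S : loop2 -> Prop) (Tan : loop2 -> loop2 -> Prop) : Prop :=
  forall L, S L -> forall X, in_g2 X ->
    exists T, in_g2 T /\ ham_vf br L X T /\ Tan L T.

Definition shiftdn : 'M[R]_N := \matrix_(i, j) ((i == ordS j)%:R).
Definition diagv (u : 'I_N -> R) : 'M[R]_N := \matrix_(i, j) ((i == j)%:R * u i).
Definition shiftupv (v : 'I_N -> R) : 'M[R]_N :=
  \matrix_(i, j) (v i * (j == ordS i)%:R).

Lemma lpoly_topP (m1 c0 c1 : 'M[R]_N) (p : int) :
  1 < p -> (if p == 1 then c1 else if p == 0 then c0 else if p == -1 then m1 else 0) = 0.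
Proof. move=> H; do 3 (case: ifP => [/eqP E|_]; first lia). by []. Qed.
Definition lpoly (m1 c0 c1 : 'M[R]_N) : loop := Loop (@lpoly_topP m1 c0 c1).

Definition Umat (u : 'I_N -> R) : loop := lpoly 0 (diagv u) shiftdn.
Definition Vmat (v : 'I_N -> R) : loop := lpoly (shiftupv v) 1%:M 0.

Definition inUV (L : loop2) : Prop :=
  exists u v : 'I_N -> R, forall p,
    coef (L ord0) p = coef (Umat u) p /\ coef (L (@Ordinal 2 1 isT)) p = coef (Vmat v) p.

(* Its tangent space at any point: derivatives d/dt (U(u + t a), V(v + t b)) *)
(*   = (sum_k a_k E_kk, lambda^{-1} sum_k b_k E_{k,k+1}).                    *)
Definition tanUV (L T : loop2) : Prop :=
  exists a b : 'I_N -> R, forall p,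
    coef (T ord0) p = coef (lpoly 0 (diagv a) 0) p /\
    coef (T (@Ordinal 2 1 isT)) p = coef (lpoly (shiftupv b) 0 0) p.

End Loop.

(* Main.v *)
Require Import Defs.
From HB Require Import structures.
From mathcomp Require Import all_boot all_order all_algebra.
From mathcomp Require Import zify ring lra.
From mathcomp Require Import reals.
Set Implicit Arguments. Unset Strict Implicit. Unset Printing Implicit Defensive.
Import Order.TTheory GRing.Theory Num.Theory.
Local Open Scope ring_scope.

Lemma tnatE (z : int) : 0 <= z -> (tnat z)%:Z = z.
Proof. by case: z. Qed.
Lemma tnat0 (z : int) : z <= 0 -> tnat z = 0%N.
Proof. case: z => [n|n] //=; rewrite lez_nat leqn0 => /eqP //. Qed.
Lemma tnat_ge (z : int) : z <= (tnat z)%:Z.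
Proof. case: z => [n|n] //=. Qed.

Section W.
Variable V : zmodType.
Definition wsum (f : int -> V) (a : int) (n : nat) := \sum_(k < n) f (a + k%:Z).

Lemma wsum_left (f : int -> V) a n : f a = 0 -> wsum f a n.+1 = wsum f (a + 1) n.
Proof.
move=> h; rewrite /wsum big_ord_recl /= addr0 h add0r.
by apply: eq_bigr => i _; rewrite /bump /= add1n -addrA; congr (f (a + _)); lia.
Qed.

Lemma wsum_right (f : int -> V) a n : f (a + n%:Z) = 0 -> wsum f a n.+1 = wsum f a n.
Proof. by move=> h; rewrite /wsum big_ord_recr /= h addr0. Qed.

Lemma wsum_ext (f : int -> V) a n i j :
  (forall q, q < a \/ a + n%:Z <= q -> f q = 0) ->
  wsum f a n = wsum f (a - i%:Z) (n + i + j).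
Proof.
move=> h.
have -> : wsum f a n = wsum f a (n + j).
  elim: j => [|j IH]; first by rewrite addn0.
  rewrite addnS wsum_right // h //; right; lia.
elim: i => [|i IH]; first by rewrite subr0 addn0.
rewrite IH.
have -> : (n + i.+1 + j = (n + i + j).+1)%N by lia.
rewrite wsum_left; last by apply: h; left; lia.
congr (wsum f _ _); lia.
Qed.

Lemma wsum_eq (f : int -> V) a n b m :
  (forall q, q < a \/ a + n%:Z <= q -> f q = 0) ->
  (forall q, q < b \/ b + m%:Z <= q -> f q = 0) ->
  wsum f a n = wsum f b m.
Proof.
move=> ha hb.
set c := Num.min a b.
set e := Num.max (a + n%:Z) (b + m%:Z).
have E1 : wsum f a n = wsum f c (n + tnat (a - c) + tnat (e - a - n%:Z)).
  rewrite (wsum_ext (tnat (a - c)) (tnat (e - a - n%:Z)) ha); congr (wsum f _ _).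
  rewrite tnatE; [lia|]. rewrite /c; lia.
have E2 : wsum f b m = wsum f c (m + tnat (b - c) + tnat (e - b - m%:Z)).
  rewrite (wsum_ext (tnat (b - c)) (tnat (e - b - m%:Z)) hb); congr (wsum f _ _).
  rewrite tnatE; [lia|]. rewrite /c; lia.
rewrite E1 E2; congr (wsum f _ _).
have h1 : 0 <= a - c by rewrite /c; lia.
have h2 : 0 <= e - a - n%:Z by rewrite /e; lia.
have h3 : 0 <= b - c by rewrite /c; lia.
have h4 : 0 <= e - b - m%:Z by rewrite /e; lia.
apply/eqP; rewrite -eqz_nat !PoszD !tnatE //; apply/eqP; lia.
Qed.

Lemma wsum_tele (f : int -> V) a n :
  wsum (fun r => f (r + 1) - f r) a n = f (a + n%:Z) - f a.
Proof.
elim: n => [|n IH]; first by rewrite /wsum big_ord0 addr0 subrr.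
rewrite /wsum big_ord_recr /=; move: IH; rewrite /wsum => ->.
have -> : a + n.+1%:Z = a + n%:Z + 1 by lia.
by rewrite addrC addrA subrK.
Qed.
End W.

Section L.
Variables (R : fieldType) (N : nat).
Implicit Types (u v w : loop R N).

Lemma lmul_wsum u v p a n :
  (forall r, r < a \/ a + n%:Z <= r -> coef u r *m coef v (p - r) = 0) ->
  coef (lmul u v) p = wsum (fun r => coef u r *m coef v (p - r)) a n.
Proof.
move=> h; rewrite /= /mul_coef.
set n0 := tnat (top u + top v - p + 1).
have -> : \sum_(k < n0) coef u (top u - k%:Z) *m coef v (p - top u + k%:Z)
   = wsum (fun r => coef u r *m coef v (p - r)) (p - top v) n0.
  rewrite /wsum (reindex_inj rev_ord_inj) /=; apply: eq_bigr => -[k hk] _ /=.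
  have hpos : 0 <= top u + top v - p + 1.
    case: (lerP 0 (top u + top v - p + 1)) => // hneg.
    by move: hk; rewrite /n0 tnat0 //; lia.
  have hn : n0%:Z = top u + top v - p + 1 by rewrite tnatE.
  congr (coef u _ *m coef v _); lia.
apply: wsum_eq => // r [hr|hr].
  by rewrite (@topP _ _ v (p - r)) ?mulmx0 //; lia.
rewrite (@topP _ _ u r) ?mul0mx //.
case: (lerP 0 (top u + top v - p + 1)) => hpos.
  by move: hr; rewrite /n0 tnatE //; lia.
by move: hr; rewrite /n0 tnat0 //; lia.
Qed.

Lemma lpolyE (m1 c0 c1 : 'M[R]_N) q : coef (lpoly m1 c0 c1) q =
  if q == 1 then c1 else if q == 0 then c0 else if q == -1 then m1 else 0.
Proof. by []. Qed.

Lemma lmul_lpR u w m1 c0 c1 :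
  (forall q, coef w q = coef (lpoly m1 c0 c1) q) -> forall q,
  coef (lmul u w) q = coef u q *m c0 + coef u (q - 1) *m c1 + coef u (q + 1) *m m1.
Proof.
move=> hw q; rewrite (@lmul_wsum _ _ _ (q - 1) 3).
  rewrite /wsum !big_ord_recr big_ord0 /= !hw !lpolyE add0r.
  have -> : q - (q - 1 + 0%:Z) = 1 by lia.
  have -> : q - (q - 1 + 1%:Z) = 0 by lia.
  have -> : q - (q - 1 + 2%:Z) = -1 by lia.
  have -> : q - 1 + 1%:Z = q by lia.
  have -> : q - 1 + 2%:Z = q + 1 by lia.
  rewrite addr0 /=; congr (_ + _); rewrite addrC //.
move=> r hr; rewrite hw lpolyE.
have -> : (q - r == 1) = false by apply/eqP; lia.
have -> : (q - r == 0) = false by apply/eqP; lia.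
have -> : (q - r == -1) = false by apply/eqP; lia.
by rewrite mulmx0.
Qed.

Lemma lmul_lpL u w m1 c0 c1 :
  (forall q, coef w q = coef (lpoly m1 c0 c1) q) -> forall q,
  coef (lmul w u) q = c0 *m coef u q + c1 *m coef u (q - 1) + m1 *m coef u (q + 1).
Proof.
move=> hw q; rewrite (@lmul_wsum _ _ _ (-1) 3).
  rewrite /wsum !big_ord_recr big_ord0 /= !hw !lpolyE add0r.
  have -> : -1 + 0%:Z = -1 by lia.
  have -> : -1 + 1%:Z = 0 by lia.
  have -> : -1 + 2%:Z = 1 by lia.
  rewrite /= subr0 opprK [q - 1]addrC [q + 1]addrC.
  by rewrite -addrA addrC.
move=> r hr; rewrite hw lpolyE.
have -> : (r == 1) = false by apply/eqP; lia.
have -> : (r == 0) = false by apply/eqP; lia.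
have -> : (r == -1) = false by apply/eqP; lia.
by rewrite mul0mx.
Qed.

Lemma form_wsum u v a n :
  (forall r, r < a \/ a + n%:Z <= r -> coef u r *m coef v (- r) = 0) ->
  Defs.form u v = wsum (fun r => \tr (coef u r *m coef v (- r))) a n.
Proof.
move=> h; rewrite /Defs.form (@lmul_wsum _ _ _ a n).
  by rewrite /wsum raddf_sum; apply: eq_bigr => k _; rewrite sub0r.
by move=> r hr; rewrite sub0r; apply: h.
Qed.
End L.

Section Ops.
Variables (R : fieldType) (N : nat).
Implicit Types (z : loop R N).
Lemma opA_pos z q : 0 < q -> coef (opA z) q = 2%:R^-1 *: coef z q.
Proof. move=> h; rewrite /= h; have -> : (q < 0) = false by lia.
have -> : (q == 0) = false by lia. by rewrite oppr0 !addr0. Qed.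
Lemma opA_neg z q : q < 0 -> coef (opA z) q = - (2%:R^-1 *: coef z q).
Proof. move=> h; rewrite /= h; have -> : (0 < q) = false by lia.
have -> : (q == 0) = false by lia. by rewrite add0r addr0 scalerN. Qed.
Lemma opA_0 z : coef (opA z) 0 = 2%:R^-1 *: Pimx (coef z 0).
Proof. by rewrite /= subrr add0r. Qed.
Lemma opD_pos z q : 0 < q -> coef (opD z) q = 2%:R^-1 *: coef z q.
Proof. move=> h; rewrite /= h; have -> : (q < 0) = false by lia.
have -> : (q == 0) = false by lia. by rewrite !oppr0 !addr0. Qed.
Lemma opD_neg z q : q < 0 -> coef (opD z) q = - (2%:R^-1 *: coef z q).
Proof. move=> h; rewrite /= h; have -> : (0 < q) = false by lia.
have -> : (q == 0) = false by lia. by rewrite add0r oppr0 addr0 scalerN. Qed.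
Lemma opD_0 z : coef (opD z) 0 = - (2%:R^-1 *: Pimx (coef z 0)).
Proof. by rewrite /= subrr add0r scalerN. Qed.
Lemma opB_nz z q : q != 0 -> coef (opB z) q = 0.
Proof. by move=> h; rewrite /= (negbTE h) oppr0 addr0 scaler0. Qed.
Lemma opB_0 z : coef (opB z) 0 = 2%:R^-1 *: (coef z 0 - Pimx (coef z 0)).
Proof. by []. Qed.
Lemma opC_nz z q : q != 0 -> coef (opC z) q = 0.
Proof. by move=> h; rewrite /= (negbTE h) addr0 scaler0. Qed.
Lemma opC_0 z : coef (opC z) 0 = 2%:R^-1 *: (coef z 0 + Pimx (coef z 0)).
Proof. by []. Qed.
Lemma opN_E (Xo : op R N) z q : coef (opN Xo z) q = - coef (Xo z) q.
Proof. by []. Qed.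

Lemma ops_z z q : 0 < q -> coef z q = 0 ->
  forall i j : 'I_2, [/\ coef (bA i j z) q = 0, coef (bB i j z) q = 0,
      coef (bC i j z) q = 0 & coef (bD i j z) q = 0].
Proof.
move=> hq hz i j.
have hq' : q != 0 by lia.
rewrite /bA /bB /bC /bD /mx2; case: (i == ord0); case: (j == ord0);
  rewrite ?opN_E ?opA_pos ?opD_pos ?opB_nz ?opC_nz ?hz ?scaler0 ?oppr0 //.
Qed.

Lemma mx2_00 (a b c d : op R N) : mx2 a b c d ord0 ord0 = a. Proof. by []. Qed.
Lemma mx2_01 (a b c d : op R N) : mx2 a b c d ord0 (Ordinal (isT : (1 < 2)%N)) = b. Proof. by []. Qed.
Lemma mx2_10 (a b c d : op R N) : mx2 a b c d (Ordinal (isT : (1 < 2)%N)) ord0 = c. Proof. by []. Qed.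
Lemma mx2_11 (a b c d : op R N) : mx2 a b c d (Ordinal (isT : (1 < 2)%N)) (Ordinal (isT : (1 < 2)%N)) = d. Proof. by []. Qed.
End Ops.

Lemma lift00 : (lift ord0 (ord0 : 'I_1) : 'I_2) = Ordinal (isT : (1 < 2)%N).
Proof. by apply: val_inj. Qed.

Section Tr.
Variables (R : fieldType) (N : nat).
Implicit Types (A B C : 'M[R]_N).
Lemma trN A : \tr (- A) = - \tr A. Proof. exact: raddfN. Qed.
Lemma trYL (al y y' y'' c0 c1 m1 : 'M[R]_N) :
  \tr (al *m (y *m c0 + y' *m c1 + y'' *m m1)) =
  \tr (y *m (c0 *m al)) + \tr (y' *m (c1 *m al)) + \tr (y'' *m (m1 *m al)).
Proof.
by rewrite !mulmxDr !mxtraceD; congr (_ + _ + _); rewrite mxtrace_mulC -mulmxA.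
Qed.
Lemma trLY (de y y' y'' c0 c1 m1 : 'M[R]_N) :
  \tr (de *m (c0 *m y + c1 *m y' + m1 *m y'')) =
  \tr (y *m (de *m c0)) + \tr (y' *m (de *m c1)) + \tr (y'' *m (de *m m1)).
Proof.
by rewrite !mulmxDr !mxtraceD (mxtrace_mulC y) (mxtrace_mulC y') (mxtrace_mulC y'') !mulmxA. Qed.
End Tr.

Notation i1 := (@Ordinal 2 1 isT).

Section Main.
Variables (R : realType) (N : nat).
Variables (L X Y : loop2 R N) (u v : 'I_N -> R).
Hypothesis hL0 : forall p, coef (L ord0) p = coef (Umat u) p.
Hypothesis hL1 : forall p, coef (L i1) p = coef (Vmat v) p.

Definition MM : nat := (tnat (top (X ord0)) + tnat (top (X i1)) + tnat (top (Y ord0))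
   + tnat (top (Y i1)) + 2)%N.

Lemma topM (i : 'I_2) : top (X i) + 2 <= MM%:Z /\ top (Y i) + 2 <= MM%:Z.
Proof.
have h1 := tnat_ge (top (X ord0)); have h2 := tnat_ge (top (X i1)).
have h3 := tnat_ge (top (Y ord0)); have h4 := tnat_ge (top (Y i1)).
have h5 : (0 <= tnat (top (X ord0)))%N by []. 
rewrite /MM; case: i => -[|[|//]] hi.
  have -> : Ordinal hi = ord0 by apply: val_inj.
  split; lia.
have -> : Ordinal hi = i1 by apply: val_inj.
split; lia.
Qed.

Lemma Lpoly (i : 'I_2) : exists m1 c0 c1,
  forall q, coef (L i) q = coef (lpoly m1 c0 c1) q.
Proof.
case: i => -[|[|//]] hi.
  have -> : Ordinal hi = ord0 by apply: val_inj.
  by exists 0, (diagv u), (@shiftdn R N); exact: hL0.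
have -> : Ordinal hi = i1 by apply: val_inj.
by exists (shiftupv v), 1%:M, 0; exact: hL1.
Qed.

Lemma lmulz (Z : loop2 R N) (hZ : forall i : 'I_2, top (Z i) + 2 <= MM%:Z) (i : 'I_2) q :
  MM%:Z <= q -> coef (lmul (Z i) (L i)) q = 0 /\ coef (lmul (L i) (Z i)) q = 0.
Proof.
move=> hq; have [m1 [c0 [c1 h]]] := Lpoly i.
have hz := hZ i.
rewrite (lmul_lpR _ h) (lmul_lpL _ h) !(@topP _ _ (Z i)) ?mulmx0 ?mul0mx ?addr0 //; lia.
Qed.

Lemma lmulz' (Z : loop2 R N) (hZ : forall i : 'I_2, top (Z i) + 2 <= MM%:Z) (i : 'I_2) q :
  MM%:Z <= q -> coef (lmul (Z i) (L i)) q = 0 /\ coef (lmul (L i) (Z i)) q = 0.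
Proof. exact: lmulz. Qed.

Definition Gt (r : int) : R :=
  \sum_(i < 2) \sum_(j < 2)
    ( \tr (coef (bA i j (lmul (X j) (L j))) r *m coef (lmul (Y i) (L i)) (- r))
    - \tr (coef (bD i j (lmul (L j) (X j))) r *m coef (lmul (L i) (Y i)) (- r))
    + \tr (coef (bB i j (lmul (L j) (X j))) r *m coef (lmul (Y i) (L i)) (- r))
    - \tr (coef (bC i j (lmul (X j) (L j))) r *m coef (lmul (L i) (Y i)) (- r))).

Lemma PB_wsum : PB (@bA R N) (@bB R N) (@bC R N) (@bD R N) L X Y
   = wsum Gt (- MM%:Z) (MM + MM).+1.
Proof.
have hX : forall i : 'I_2, top (X i) + 2 <= MM%:Z by move=> i; case: (topM i).
have hY : forall i : 'I_2, top (Y i) + 2 <= MM%:Z by move=> i; case: (topM i).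
rewrite /PB /wsum /Gt; symmetry; rewrite exchange_big; apply: eq_bigr => i _.
rewrite exchange_big; apply: eq_bigr => j _.
rewrite sumrB big_split sumrB /=.
have zA : forall r, r < - MM%:Z \/ - MM%:Z + (MM + MM).+1%:Z <= r ->
  forall (Op : 'I_2 -> 'I_2 -> op R N) (Z Z' : loop R N),
  (forall q, 0 < q -> coef Z q = 0 -> coef (Op i j Z) q = 0) ->
  (MM%:Z <= r -> coef Z r = 0) -> (MM%:Z <= - r -> coef Z' (- r) = 0) ->
  coef (Op i j Z) r *m coef Z' (- r) = 0.
  move=> r hr Op Z Z' hOp hZ hZ'; case: hr => hr.
    by rewrite hZ' ?mulmx0 //; lia.
  by rewrite hOp ?mul0mx ?hZ //; lia.
rewrite !(@form_wsum _ _ _ _ (- MM%:Z) (MM + MM).+1) //.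
- move=> r hr; apply: zA => // [q hq hz|hr'|hr']; first by case: (ops_z hq hz i j).
  + by case: (lmulz hX j hr').
  + by case: (lmulz hY i hr').
- move=> r hr; apply: zA => // [q hq hz|hr'|hr']; first by case: (ops_z hq hz i j).
  + by case: (lmulz hX j hr').
  + by case: (lmulz hY i hr').
- move=> r hr; apply: zA => // [q hq hz|hr'|hr']; first by case: (ops_z hq hz i j).
  + by case: (lmulz hX j hr').
  + by case: (lmulz hY i hr').
- move=> r hr; apply: zA => // [q hq hz|hr'|hr']; first by case: (ops_z hq hz i j).
  + by case: (lmulz hX j hr').
  + by case: (lmulz hY i hr').
Qed.

Notation X0 := (X ord0). Notation X1 := (X i1).
Notation Y0 := (Y ord0). Notation Y1 := (Y i1).
Notation L0 := (L ord0). Notation L1 := (L i1).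
Notation a0 := (lmul X0 L0). Notation b0 := (lmul L0 X0).
Notation a1 := (lmul X1 L1). Notation b1 := (lmul L1 X1).
Notation Du := (diagv u). Notation S := (@shiftdn R N). Notation W := (shiftupv v).

Definition al0 r := coef (opA a0) r + coef (opB b0) r + coef (opN (@opB R N) a1) r + coef (opB b1) r.
Definition de0 r := coef (opD b0) r + coef (opC a0) r + coef (opN (@opC R N) b1) r + coef (opC a1) r.
Definition al1 r := coef (opC a0) r + coef (opB b0) r + coef (opA a1) r + coef (opN (@opC R N) b1) r.
Definition de1 r := coef (opB b0) r + coef (opC a0) r + coef (opD b1) r + coef (opN (@opB R N) a1) r.
Definition xi0 r := Du *m al0 r - de0 r *m Du + (S *m al0 (r - 1) - de0 (r - 1) *m S).
Definition xi1 r := al1 r - de1 r + (W *m al1 (r + 1) - de1 (r + 1) *m W).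
Definition Gh r := \tr (coef Y0 (- r) *m xi0 r) + \tr (coef Y1 (- r) *m xi1 r).
Definition K0 r := \tr (coef Y0 (- r) *m (S *m al0 (r - 1) - de0 (r - 1) *m S)).
Definition K1 r := \tr (coef Y1 (1 - r) *m (W *m al1 r - de1 r *m W)).

Lemma hL0' q : coef L0 q = coef (lpoly 0 Du S) q. Proof. exact: hL0. Qed.
Lemma hL1' q : coef L1 q = coef (lpoly W 1%:M 0) q. Proof. exact: hL1. Qed.

Lemma Gt_decomp r : Gt r = Gh r + (K0 (r + 1) - K0 r) - (K1 (r + 1) - K1 r).
Proof.
rewrite /Gt !big_ord_recl !big_ord0 !lift00 !addr0.
rewrite /bA /bB /bC /bD !mx2_00 !mx2_01 !mx2_10 !mx2_11.
rewrite (lmul_lpR Y0 hL0' (- r)) (lmul_lpL Y0 hL0' (- r)) (lmul_lpR Y1 hL1' (- r)) (lmul_lpL Y1 hL1' (- r)).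
rewrite /Gh /K0 /K1 /xi0 /xi1 addrK.
have -> : 1 - (r + 1) = - r by ring.
have -> : - (r + 1) = - r - 1 by ring.
have -> : 1 - r = - r + 1 by ring.
move: (al0 (r - 1)) (de0 (r - 1)) (al1 (r + 1)) (de1 (r + 1)) => A0m D0m A1p D1p.
rewrite /al0 /de0 /al1 /de1.
move: (coef (opA a0) r) (coef (opB b0) r) (coef (opN (@opB R N) a1) r) (coef (opB b1) r)
  (coef (opD b0) r) (coef (opC a0) r) (coef (opN (@opC R N) b1) r) (coef (opC a1) r)
  (coef (opA a1) r) (coef (opD b1) r) => t1 t2 t3 t4 t5 t6 t7 t8 t9 t10.
move: (coef Y0 (- r)) (coef Y0 (- r - 1)) (coef Y0 (- r + 1))
  (coef Y1 (- r)) (coef Y1 (- r - 1)) (coef Y1 (- r + 1)) => y0 y0m y0p y1 y1m y1p.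
move: Du S W => Du S W.
rewrite !(trYL _ y0) !(trLY _ y0) !(trYL _ y1) !(trLY _ y1).
rewrite !mul0mx !mulmx0 !mulmx1 !mul1mx !mxtrace0 !addr0.
do 3 rewrite ?mulmxDr ?mulmxDl ?mulmxN ?mulNmx.
rewrite !mxtraceD !trN.
ring.
Qed.
End Main.

Section Ids.
Variables (R : fieldType) (N : nat).
Lemma zmod4 (a b c d : 'M[R]_N) : a + b - (a + c) + (c + d - (b + d)) = 0.
Proof. by apply/matrixP => i j; rewrite !mxE; ring. Qed.

Lemma F1_id (c : R) (x x' x'' D S : 'M[R]_N) :
  D *m (c *: (x *m D + x' *m S)) - (c *: (D *m x + S *m x')) *m D
  + (S *m (c *: (x' *m D + x'' *m S)) - (c *: (D *m x' + S *m x'')) *m S) = 0.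
Proof.
rewrite -!scalemxAr -!scalemxAl -!scalerBr -scalerDr.
rewrite !mulmxDr !mulmxDl !mulmxA.
by rewrite zmod4 scaler0.
Qed.

Lemma F3_id (c : R) (x x' x'' W : 'M[R]_N) :
  c *: (x + x' *m W - (x + W *m x'))
  + (W *m (c *: (x' + x'' *m W)) - (c *: (x' + W *m x'')) *m W) = 0.
Proof.
rewrite -!scalemxAr -!scalemxAl -!scalerBr -scalerDr.
rewrite !mulmxDr !mulmxDl !mulmxA.
move: (W *m x' *m W) (x' *m W) (W *m x') (W *m x'' *m W) => p q s t.
by apply/matrixP => i j; rewrite !mxE; ring.
Qed.

Lemma eD (A B : 'M[R]_N) i j : (A + B) i j = A i j + B i j. Proof. by rewrite mxE. Qed.
Lemma eN (A : 'M[R]_N) i j : (- A) i j = - A i j. Proof. by rewrite mxE. Qed.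
Lemma eZ c (A : 'M[R]_N) i j : (c *: A) i j = c * A i j. Proof. by rewrite mxE. Qed.
Lemma eDl (w : 'I_N -> R) (M : 'M[R]_N) i j : (diagv w *m M) i j = w i * M i j.
Proof.
rewrite mxE (bigD1 i) //= big1 ?addr0 => [|k hk]; rewrite mxE.
  by rewrite eqxx mul1r.
by rewrite eq_sym (negbTE hk) mul0r mul0r.
Qed.
Lemma eDr (w : 'I_N -> R) (M : 'M[R]_N) i j : (M *m diagv w) i j = M i j * w j.
Proof.
rewrite mxE (bigD1 j) //= big1 ?addr0 => [|k hk]; rewrite mxE.
  by rewrite eqxx mul1r.
by rewrite (negbTE hk) mul0r mulr0.
Qed.
Lemma eSl (M : 'M[R]_N) k j : (shiftdn R N *m M) (ordS k) j = M k j.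
Proof.
rewrite mxE (bigD1 k) //= big1 ?addr0 => [|m hm]; rewrite mxE.
  by rewrite eqxx mul1r.
have -> : (ordS k == ordS m) = false.
  by apply/negbTE; apply: contra hm => /eqP /ordS_inj ->.
by rewrite mul0r.
Qed.
Lemma eSr (M : 'M[R]_N) i j : (M *m shiftdn R N) i j = M i (ordS j).
Proof.
rewrite mxE (bigD1 (ordS j)) //= big1 ?addr0 => [|m hm]; rewrite mxE.
  by rewrite eqxx mulr1.
by rewrite (negbTE hm) mulr0.
Qed.
Notation pic j k := (@pi_coef R N j k).
Lemma ePi (M : 'M[R]_N) i : Pimx M i i = \sum_j pic j i * M j j.
Proof. by rewrite mxE eqxx. Qed.
Lemma sum_ind (f : 'I_N -> R) k : \sum_j (j == k)%:R * f j = f k.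
Proof.
rewrite (bigD1 k) //= eqxx mul1r big1 ?addr0 // => j /negbTE ->; by rewrite mul0r.
Qed.

Lemma ordS_val (k : 'I_N) : (ordS k : nat) = if k.+1 == N then 0%N else k.+1.
Proof.
rewrite /=; case: eqP => h; first by rewrite h modnn.
by rewrite modn_small //; have := ltn_ord k; lia.
Qed.

Lemma pi_diff (j k : 'I_N) : pic j k - pic j (ordS k) =
  (j == k)%:R + (j == ordS k)%:R - (if k.+1 == N then 2 else 0).
Proof.
rewrite /pi_coef -!val_eqE /= -[(_.+1 %% N)%N]/(ordS k : nat) ordS_val.
move: (ltn_ord j) (ltn_ord k); move: (nat_of_ord j) (nat_of_ord k) => J K hJ hK.
case: eqP => hKN.
  do ![case: ifP => ?]; do ![case: eqP => ?]; try lia; simpl; ring.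
do ![case: ifP => ?]; do ![case: eqP => ?]; try lia; simpl; ring.
Qed.

Lemma PdiffM (A B : 'M[R]_N) k : \tr A = \tr B ->
  Pimx A k k - Pimx B k k - (Pimx A (ordS k) (ordS k) - Pimx B (ordS k) (ordS k))
  = (A k k - B k k) + (A (ordS k) (ordS k) - B (ordS k) (ordS k)).
Proof.
move=> htr; rewrite !ePi.
have hz : \sum_j (A j j - B j j) = 0.
  rewrite sumrB; have -> : \sum_j A j j = \tr A by [].
  by have -> : \sum_j B j j = \tr B by []; rewrite htr subrr.
have -> : \sum_j pic j k * A j j - \sum_j pic j k * B j j -
   (\sum_j pic j (ordS k) * A j j - \sum_j pic j (ordS k) * B j j)
   = \sum_j (pic j k - pic j (ordS k)) * (A j j - B j j).
  rewrite -!sumrB; apply: eq_bigr => j _; ring.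
under eq_bigr do rewrite pi_diff.
rewrite (eq_bigr (fun j => (j == k)%:R * (A j j - B j j) + (j == ordS k)%:R * (A j j - B j j)
   - (if k.+1 == N then 2 else 0) * (A j j - B j j))); last by move=> j _ /=; rewrite mulrBl mulrDl.
by rewrite !sumrB big_split /= !sum_ind -mulr_sumr hz mulr0 subr0.
Qed.
End Ids.

Section Main2.
Variables (R : realType) (N : nat).
Variables (L X Y : loop2 R N) (u v : 'I_N -> R).
Hypothesis hL0 : forall p, coef (L ord0) p = coef (Umat u) p.
Hypothesis hL1 : forall p, coef (L i1) p = coef (Vmat v) p.

Notation X0 := (X ord0). Notation X1 := (X i1).
Notation L0 := (L ord0). Notation L1 := (L i1).
Notation a0 := (lmul X0 L0). Notation b0 := (lmul L0 X0).
Notation a1 := (lmul X1 L1). Notation b1 := (lmul L1 X1).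
Notation Du := (diagv u). Notation S := (@shiftdn R N). Notation W := (shiftupv v).

Lemma a0E q : coef a0 q = coef X0 q *m Du + coef X0 (q - 1) *m S.
Proof. by rewrite (lmul_lpR _ (hL0' hL0)) mulmx0 addr0. Qed.
Lemma b0E q : coef b0 q = Du *m coef X0 q + S *m coef X0 (q - 1).
Proof. by rewrite (lmul_lpL _ (hL0' hL0)) mul0mx addr0. Qed.
Lemma a1E q : coef a1 q = coef X1 q + coef X1 (q + 1) *m W.
Proof. by rewrite (lmul_lpR _ (hL1' hL1)) mulmx0 mulmx1 addr0. Qed.
Lemma b1E q : coef b1 q = coef X1 q + W *m coef X1 (q + 1).
Proof. by rewrite (lmul_lpL _ (hL1' hL1)) mul0mx mul1mx addr0. Qed.

Lemma xi0_z r : r != 0 -> r != 1 -> xi0 L X u r = 0.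
Proof.
move=> h0 h1; rewrite /xi0 /al0 /de0 !opN_E.
have hr0 : r != 0 by [].
have hr1 : r - 1 != 0 by lia.
rewrite !(opB_nz _ hr0) !(opB_nz _ hr1) !(opC_nz _ hr0) !(opC_nz _ hr1) !oppr0 !addr0.
case: (ltrP 0 r) => hp.
  have hp' : 0 < r - 1 by lia.
  rewrite !(opA_pos _ hp) !(opA_pos _ hp') !(opD_pos _ hp) !(opD_pos _ hp').
  by rewrite !a0E !b0E F1_id.
have hn : r < 0 by lia.
have hn' : r - 1 < 0 by lia.
rewrite !(opA_neg _ hn) !(opA_neg _ hn') !(opD_neg _ hn) !(opD_neg _ hn').
by rewrite -!scaleNr !a0E !b0E F1_id.
Qed.
End Main2.

Lemma F3_idN (R : fieldType) (N : nat) (c : R) (x x' x'' W : 'M[R]_N) :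
  - (c *: (x + x' *m W)) - - (c *: (x + W *m x'))
  + (W *m - (c *: (x' + x'' *m W)) - (- (c *: (x' + W *m x''))) *m W) = 0.
Proof.
rewrite !mulmxN !mulNmx -!scalemxAr -!scalemxAl.
rewrite !mulmxDr !mulmxDl !mulmxA.
move: (W *m x' *m W) (x' *m W) (W *m x') (W *m x'' *m W) => p q s t.
by apply/matrixP => i j; rewrite !mxE; ring.
Qed.

Section Main3.
Variables (R : realType) (N : nat).
Variables (L X Y : loop2 R N) (u v : 'I_N -> R).
Hypothesis hL0 : forall p, coef (L ord0) p = coef (Umat u) p.
Hypothesis hL1 : forall p, coef (L i1) p = coef (Vmat v) p.

Notation X0 := (X ord0). Notation X1 := (X i1).
Notation L0 := (L ord0). Notation L1 := (L i1).
Notation a0 := (lmul X0 L0). Notation b0 := (lmul L0 X0).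
Notation a1 := (lmul X1 L1). Notation b1 := (lmul L1 X1).
Notation Du := (diagv u). Notation S := (@shiftdn R N). Notation W := (shiftupv v).

Lemma al1_pos r : 0 < r -> al1 L X r = 2%:R^-1 *: coef a1 r /\ de1 L X r = 2%:R^-1 *: coef b1 r.
Proof.
move=> hp; have h : r != 0 by lia.
rewrite /al1 /de1 !opN_E !(opC_nz _ h) !(opB_nz _ h) (opA_pos _ hp) (opD_pos _ hp).
by rewrite !oppr0 !addr0 !add0r.
Qed.

Lemma al1_neg r : r < 0 -> al1 L X r = - (2%:R^-1 *: coef a1 r) /\ de1 L X r = - (2%:R^-1 *: coef b1 r).
Proof.
move=> hp; have h : r != 0 by lia.
rewrite /al1 /de1 !opN_E !(opC_nz _ h) !(opB_nz _ h) (opA_neg _ hp) (opD_neg _ hp).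
by rewrite !oppr0 !addr0 !add0r.
Qed.

Lemma al1_0 : al1 L X 0 - de1 L X 0 = 2%:R^-1 *: (coef a1 0 - coef b1 0).
Proof.
rewrite /al1 /de1 !opN_E !opC_0 !opB_0 !opA_0 !opD_0.
move: (coef a0 0) (coef b0 0) (coef a1 0) (coef b1 0) => A B C D.
by apply/matrixP => i j; rewrite !mxE; ring.
Qed.

Lemma xi1_z r : r != -1 -> xi1 L X v r = 0.
Proof.
move=> hr; case: (lerP 0 r) => hr0.
  have hp1 : 0 < r + 1 by lia.
  have E1 : al1 L X r - de1 L X r = 2%:R^-1 *: (coef a1 r - coef b1 r).
    case: (ltrP 0 r) => hr1.
      by case: (al1_pos hr1) => -> ->; rewrite scalerBr.
    have -> : r = 0 by lia.
    exact: al1_0.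
  rewrite /xi1 E1; case: (al1_pos hp1) => -> ->.
  by rewrite !(a1E X hL1) !(b1E X hL1) F3_id.
have hn1 : r + 1 < 0 by lia.
rewrite /xi1; case: (al1_neg hr0) => -> ->.
case: (al1_neg hn1) => -> ->.
by rewrite !(a1E X hL1) !(b1E X hL1) F3_idN.
Qed.

Lemma xi0_1 k : (xi0 L X u 1) (ordS k) k = 0.
Proof.
rewrite /xi0 subrr /al0 /de0 !opN_E.
have h1 : (1:int) != 0 by [].
have p1 : (0:int) < 1 by [].
rewrite !(opB_nz _ h1) !(opC_nz _ h1) !(opA_pos _ p1) !(opD_pos _ p1).
rewrite !opA_0 !opB_0 !opC_0 !opD_0 !oppr0 !addr0.
rewrite (a0E X hL0 1) (b0E X hL0 1) subrr.
have hc := @PdiffM _ _ (coef a0 0) (coef b0 0) k.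
have hd := @PdiffM _ _ (coef a1 0) (coef b1 0) k.
have hA : (coef a0 0) k k = coef X0 0 k k * u k + coef X0 (0 - 1) k (ordS k).
  by rewrite (a0E X hL0) eD eDr eSr.
have hB : (coef b0 0) (ordS k) (ordS k) = u (ordS k) * coef X0 0 (ordS k) (ordS k)
    + coef X0 (0 - 1) k (ordS k).
  by rewrite (b0E X hL0) eD eDl eSl.
have tA : \tr (coef a0 0) = \tr (coef b0 0).
  by rewrite (a0E X hL0) (b0E X hL0) !mxtraceD mxtrace_mulC [\tr (_ *m S)]mxtrace_mulC.
have tB : \tr (coef a1 0) = \tr (coef b1 0).
  by rewrite (a1E X hL1) (b1E X hL1) !mxtraceD mxtrace_mulC.
move: (hc tA) (hd tB) => {hc hd tA tB} hc hd.
do 6 rewrite ?eD ?eN ?eZ ?eDl ?eDr ?eSl ?eSr.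
lra.
Qed.
End Main3.

Section Div.
Variable N : nat.
Lemma ndv0 (i j : 'I_N) (p : int) : p = 0 -> i != j -> ~ (N%:Z %| (i%:Z - j%:Z - p))%Z.
Proof.
move=> -> hne /dvdzP [c hc]; move: hne; rewrite -val_eqE /= => /eqP hne.
have hi := ltn_ord i; have hj := ltn_ord j.
have h1 : c <= 0 by nia.
have h2 : 0 <= c by nia.
have e : c = 0 by lia.
rewrite e in hc; lia.
Qed.

Lemma ndv1 (i j : 'I_N) (p : int) : p = 1 -> i != ordS j -> ~ (N%:Z %| (i%:Z - j%:Z - p))%Z.
Proof.
move=> -> hne /dvdzP [c hc]; move: hne; rewrite -val_eqE /=.
rewrite -[(_ %% N)%N]/(ordS j : nat) ordS_val.
have hi := ltn_ord i; have hj := ltn_ord j.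
have h1 : c <= 0 by nia.
have h2 : -1 <= c by nia.
have [hjN|hjN] := eqVneq j.+1 N; rewrite ?hjN ?eqxx ?(negbTE hjN) => /eqP hne.
  by (have [e|e] : c = 0 \/ c = -1 by lia); rewrite e in hc; lia.
by (have [e|e] : c = 0 \/ c = -1 by lia); rewrite e in hc; lia.
Qed.

Lemma ndvm1 (i j : 'I_N) (p : int) : p = -1 -> j != ordS i -> ~ (N%:Z %| (i%:Z - j%:Z - p))%Z.
Proof.
move=> -> hne /dvdzP [c hc]; move: hne; rewrite -val_eqE /=.
rewrite -[(_ %% N)%N]/(ordS i : nat) ordS_val.
have hi := ltn_ord i; have hj := ltn_ord j.
have h1 : c <= 1 by nia.
have h2 : 0 <= c by nia.
have [hjN|hjN] := eqVneq i.+1 N; rewrite ?hjN ?eqxx ?(negbTE hjN) => /eqP hne.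
  by (have [e|e] : c = 0 \/ c = 1 by lia); rewrite e in hc; lia.
by (have [e|e] : c = 0 \/ c = 1 by lia); rewrite e in hc; lia.
Qed.

Lemma dv0 (i : 'I_N) (p : int) : p = 0 -> (N%:Z %| (i%:Z - i%:Z - p))%Z.
Proof. by move=> ->; rewrite subrr subr0 dvdz0. Qed.

Lemma dvm1 (i : 'I_N) (p : int) : p = -1 -> (N%:Z %| (i%:Z - (ordS i)%:Z - p))%Z.
Proof.
move=> ->; rewrite ordS_val; have hi := ltn_ord i.
case: eqP => h.
  have -> : i%:Z - 0%:Z - -1 = N%:Z by lia.
  exact: dvdzz.
have -> : i%:Z - i.+1%:Z - -1 = 0 by lia.
exact: dvdz0.
Qed.
End Div.

Section Tr2.
Variables (R : fieldType) (N : nat).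
Lemma trace_sup (Yc M : 'M[R]_N) : (forall i j, j != ordS i -> Yc i j = 0) ->
  (forall i, M (ordS i) i = 0) -> \tr (Yc *m M) = 0.
Proof.
move=> hY hM; apply: big1 => i _; rewrite mxE; apply: big1 => j _.
case: (eqVneq j (ordS i)) => [->|h]; first by rewrite hM mulr0.
by rewrite hY ?mul0r.
Qed.
Lemma trace_diag (Yc M M' : 'M[R]_N) : (forall i j, i != j -> Yc i j = 0) ->
  (forall i, M i i = M' i i) -> \tr (Yc *m M) = \tr (Yc *m M').
Proof.
move=> hY hM; apply: eq_bigr => i _; rewrite !mxE; apply: eq_bigr => j _.
case: (eqVneq i j) => [->|h]; first by rewrite hM.
by rewrite hY ?mul0r.
Qed.
Lemma trace_sub (Yc M M' : 'M[R]_N) : (forall i j, i != ordS j -> Yc i j = 0) ->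
  (forall j, M j (ordS j) = M' j (ordS j)) -> \tr (Yc *m M) = \tr (Yc *m M').
Proof.
move=> hY hM; apply: eq_bigr => i _; rewrite !mxE; apply: eq_bigr => j _.
case: (eqVneq i (ordS j)) => [->|h]; first by rewrite hM.
by rewrite hY ?mul0r.
Qed.
End Tr2.

Section Final.
Variables (R : realType) (N : nat).
Variables (L X Y : loop2 R N) (u v : 'I_N -> R).
Hypothesis hL0 : forall p, coef (L ord0) p = coef (Umat u) p.
Hypothesis hL1 : forall p, coef (L i1) p = coef (Vmat v) p.
Hypothesis hY : in_g2 Y.

Lemma al_z q : (MM X Y)%:Z <= q ->
  [/\ al0 L X q = 0, de0 L X q = 0, al1 L X q = 0 & de1 L X q = 0].
Proof.
move=> hq.
have hX : forall i : 'I_2, top (X i) + 2 <= (MM X Y)%:Z by move=> i; case: (topM X Y i).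
have hM2 : 2 <= (MM X Y)%:Z by have := hX ord0; have := tnat_ge (top (X ord0)); rewrite /MM; lia.
have hp : 0 < q by lia.
have h : q != 0 by lia.
have [za0 zb0] := lmulz hL0 hL1 hX ord0 hq.
have [za1 zb1] := lmulz hL0 hL1 hX i1 hq.
rewrite /al0 /de0 /al1 /de1 !opN_E !(opB_nz _ h) !(opC_nz _ h) !(opA_pos _ hp) !(opD_pos _ hp).
by rewrite za0 zb0 za1 zb1 !scaler0 !oppr0 !addr0.
Qed.

Lemma Gh_z r : r != 0 -> r != -1 -> Gh L X Y u v r = 0.
Proof.
move=> h0 hm1; rewrite /Gh.
have e1 : xi1 L X v r = 0 by apply: xi1_z.
rewrite e1 mulmx0 mxtrace0 addr0.
case: (eqVneq r 1) => [e|h1].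
  apply: trace_sup => [i j hne|i]; last by rewrite e; apply: xi0_1.
  apply: (hY ord0); apply: ndvm1 hne; rewrite e //.
have e0 : xi0 L X u r = 0 by apply: xi0_z.
by rewrite e0 mulmx0 mxtrace0.
Qed.

Lemma PB_eq : PB (@bA R N) (@bB R N) (@bC R N) (@bD R N) L X Y =
  \tr (coef (Y ord0) 0 *m xi0 L X u 0) + \tr (coef (Y i1) 1 *m xi1 L X v (-1)).
Proof.
have hX : forall i : 'I_2, top (X i) + 2 <= (MM X Y)%:Z by move=> i; case: (topM X Y i).
have hYt : forall i : 'I_2, top (Y i) + 2 <= (MM X Y)%:Z by move=> i; case: (topM X Y i).
have hM2 : (2 <= MM X Y)%N by rewrite /MM; lia.
set M := MM X Y.
rewrite (PB_wsum X Y hL0 hL1) -/M.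
have hw : wsum (Gh L X Y u v) (- M%:Z) (M + M).+1 = wsum (Gh L X Y u v) (-1) 2.
  apply: wsum_eq => q hq; apply: Gh_z; lia.
move: hw; rewrite /wsum => hw.
under eq_bigr do rewrite (Gt_decomp X Y hL0 hL1).
rewrite sumrB big_split /= hw.
have t0 := wsum_tele (K0 L X Y) (- M%:Z) (M + M).+1.
have t1 := wsum_tele (K1 L X Y v) (- M%:Z) (M + M).+1.
rewrite /wsum /= in t0 t1; rewrite t0 t1.
have eM : - M%:Z + (M + M).+1%:Z = M%:Z + 1 by lia.
rewrite eM.
have [z1 z2 z3 z4] := al_z (le_refl M%:Z).
have hM1 : M%:Z <= M%:Z + 1 by lia.
have [z5 z6 z7 z8] := al_z hM1.
have k0a : K0 L X Y (M%:Z + 1) = 0.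
  by rewrite /K0 addrK z1 z2 mulmx0 mul0mx subrr mulmx0 mxtrace0.
have k0b : K0 L X Y (- M%:Z) = 0.
  rewrite /K0 opprK (@topP _ _ (Y ord0)) ?mul0mx ?mxtrace0 //.
  by have := hYt ord0; lia.
have k1a : K1 L X Y v (M%:Z + 1) = 0.
  by rewrite /K1 z7 z8 mulmx0 mul0mx subrr mulmx0 mxtrace0.
have k1b : K1 L X Y v (- M%:Z) = 0.
  rewrite /K1 (@topP _ _ (Y i1)) ?mul0mx ?mxtrace0 //.
  by have := hYt i1; lia.
rewrite k0a k0b k1a k1b !subrr !addr0 subr0.
rewrite !big_ord_recr big_ord0 /= add0r /Gh.
have -> : (-1 : int) + 0%:Z = -1 by [].
have -> : (-1 : int) + 1%:Z = 0 by [].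
have e0 : xi0 L X u (-1) = 0 by apply: xi0_z.
have e1 : xi1 L X v 0 = 0 by apply: xi1_z.
by rewrite e0 e1 !mulmx0 !mxtrace0 add0r addr0 opprK oppr0 addrC.
Qed.
End Final.

Theorem proposition10 (R : realType) (N : nat) :
  (2 <= N)%N ->
  poisson_submanifold
    (PB (@bA R N) (@bB R N) (@bC R N) (@bD R N))
    (@inUV R N) (@tanUV R N).
Proof.
move=> hN L [u [v hL]] X hX.
have hL0 : forall p, coef (L ord0) p = coef (Umat u) p by move=> p; case: (hL p).
have hL1 : forall p, coef (L i1) p = coef (Vmat v) p by move=> p; case: (hL p).
set a : 'I_N -> R := fun k => xi0 L X u 0 k k.
set b : 'I_N -> R := fun k => xi1 L X v (-1) k (ordS k).
exists (fun k : 'I_2 => if (k : nat) == 0%N then lpoly 0 (diagv a) 0 else lpoly (shiftupv b) 0 0).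
split; [|split].
- move=> k; case: k => -[|[|//]] hk /= p i j hnd; rewrite lpolyE.
  + case: eqP => _; first by rewrite mxE.
    case: eqP => hp0.
      rewrite mxE; case: eqP => [eij|]; last by rewrite mul0r.
      by exfalso; apply: hnd; rewrite eij; apply: dv0.
    by case: eqP => _; rewrite mxE.
  + case: eqP => _; first by rewrite mxE.
    case: eqP => _; first by rewrite mxE.
    case: eqP => hp; last by rewrite mxE.
    rewrite mxE; case: eqP => [eij|]; last by rewrite mulr0.
    by exfalso; apply: hnd; rewrite eij; apply: dvm1.
- move=> Y hY; rewrite (PB_eq X hL0 hL1 hY) /form2 !big_ord_recl big_ord0 lift00 /= addr0.
  rewrite /Defs.form (lmul_lpR (Y ord0) (fun q => erefl (coef (lpoly 0 (diagv a) 0) q))).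
  rewrite (lmul_lpR (Y i1) (fun q => erefl (coef (lpoly (shiftupv b) 0 0) q))).
  rewrite !mulmx0 !addr0 add0r.
  congr (_ + _).
    apply: trace_diag => [i j hne|i]; first by apply: (hY ord0); apply: ndv0.
    have -> : diagv a i i = a i by rewrite mxE eqxx mul1r.
    by [].
  apply: trace_sub => [i j hne|j]; first by apply: (hY i1); apply: ndv1.
  have -> : shiftupv b j (ordS j) = b j by rewrite mxE eqxx mulr1.
  by [].
- by exists a, b.
Qed.
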